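(* For every $n \in \mathbb{N}$, \[ g(n) \le \tau_3(n) \le \tfrac{9}{2}\, g(n). \]
   Context: A colouring of $E(K_n)$ is almost Gallai (almost $3$-Gallai) if no two rainbow triangles share an edge, where a triangle is rainbow if its three edges have pairwise distinct colours. $\tau_3(n)$ is the maximum number of rainbow triangles in an almost Gallai colouring $c: E(K_n) \to \mathbb{N}$ (any number of colours), and $g(n)$ is the maximum number of rainbow triangles in an almost Gallai colouring $c : E(K_n) \to \{R,B,G\}$ using at most three colours. *)

(* Defs.v *)
From mathcomp Require Import all_boot.
Set Implicit Arguments. Unset Strict Implicit. Unset Printing Implicit Defensive.

(* An edge colouring of K_n with colours in C: a symmetric function on pairs
   of vertices of 'I_n (its values on the diagonal are irrelevant). *)
Definition sym_colouring (n : nat) (C : Type) (c : 'I_n -> 'I_n -> C) : Prop :=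
  forall x y : 'I_n, c x y = c y x.

(* A triangle T (a 3-subset of vertices) is rainbow under c if its three edges
   have pairwise distinct colours. *)
Definition rainbow (n : nat) (C : eqType) (c : 'I_n -> 'I_n -> C)
  (T : {set 'I_n}) : bool :=
  (#|T| == 3) &&
  [forall x in T, forall y in T, forall z in T, forall w in T,
     [&& x != y, z != w & [set x; y] != [set z; w]] ==> (c x y != c z w)].

Definition rainbow_triangles (n : nat) (C : eqType) (c : 'I_n -> 'I_n -> C)
  : {set {set 'I_n}} := [set T | rainbow c T].

(* almost Gallai: no two (distinct) rainbow triangles share an edge,
   i.e. two distinct rainbow triangles share at most one vertex. *)
Definition almost_gallai (n : nat) (C : eqType) (c : 'I_n -> 'I_n -> C) : bool :=
  [forall T1 in rainbow_triangles c, forall T2 in rainbow_triangles c,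
     (T1 != T2) ==> (#|T1 :&: T2| <= 1)].

Definition is_max_rainbow (C : eqType) (n k : nat) : Prop :=
  (exists c : 'I_n -> 'I_n -> C,
      sym_colouring c /\ almost_gallai c /\ #|rainbow_triangles c| = k) /\
  (forall c : 'I_n -> 'I_n -> C,
      sym_colouring c -> almost_gallai c -> #|rainbow_triangles c| <= k).

(* tau_3(n) = t : colours in N (any number of colours). *)
Definition is_tau3 (n t : nat) : Prop := is_max_rainbow nat n t.

(* g(n) = g : colours in a 3-element set {R,B,G} (here 'I_3). *)
Definition is_g (n g : nat) : Prop := is_max_rainbow (ordinal 3) n g.

(* Main.v *)
Require Import Defs.
From mathcomp Require Import all_boot zify.
Set Implicit Arguments. Unset Strict Implicit. Unset Printing Implicit Defensive.

Lemma card3 (n : nat) (T : {set 'I_n}) : #|T| = 3 ->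
  exists x y z, [/\ x != y, y != z, x != z & T = [set x; y; z]].
Proof.
move=> H3; have : 2 < #|T| by rewrite H3.
case/card_gt2P => x [y [z [[xT yT zT] [xy yz zx]]]].
exists x, y, z; split => //; first by rewrite eq_sym.
apply/eqP; rewrite eq_sym eqEcard H3 -setUA cardsU1 cards2 !inE negb_or xy eq_sym zx yz /= andbT.
by apply/subsetP => w; rewrite !inE => /or3P[] /eqP ->.
Qed.

Lemma cards3 (n : nat) (x y z : 'I_n) : x != y -> y != z -> x != z ->
  #|[set x; y; z]| = 3.
Proof. by move=> xy yz xz; rewrite -setUA cardsU1 cards2 !inE negb_or xy xz yz. Qed.

Lemma rainbowE (C : eqType) n (c : 'I_n -> 'I_n -> C) (x y z : 'I_n) :
  sym_colouring c -> x != y -> y != z -> x != z ->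
  rainbow c [set x; y; z] = [&& c x y != c y z, c y z != c x z & c x y != c x z].
Proof.
move=> Hs xy yz xz; rewrite /rainbow cards3 // eqxx /=.
apply/idP/idP.
- move=> H.
  have K : forall a b e f, a \in [set x; y; z] -> b \in [set x; y; z] ->
     e \in [set x; y; z] -> f \in [set x; y; z] -> a != b -> e != f ->
     [set a; b] != [set e; f] -> c a b != c e f.
    move=> a b e f ha hb he hf ab ef ne.
    move: H => /forall_inP/(_ a ha)/forall_inP/(_ b hb)/forall_inP/(_ e he)
      /forall_inP/(_ f hf)/implyP; apply; by rewrite ab ef ne.
  have N : forall a b e f : 'I_n, (a \notin [set e; f]) || (b \notin [set e; f]) -> [set a; b] != [set e; f].
    move=> a b e f Hn; apply/negP => /eqP E; move: Hn; by rewrite -E !inE !eqxx ?orbT.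
  rewrite !K ?inE ?eqxx ?orbT //; apply: N; rewrite !inE !negb_or ?eqxx /= ?xy ?xz ?yz ?(eq_sym y x) ?(eq_sym z x) ?(eq_sym z y) ?xy ?xz ?yz ?orbT //.
- case/and3P => H1 H2 H3.
  apply/forall_inP => a ha; apply/forall_inP => b hb; apply/forall_inP => e he;
  apply/forall_inP => f hf; apply/implyP => /and3P[ab ef ne].
  move: ha hb he hf ab ef ne; rewrite !inE -!orbA.
  case/or3P => /eqP -> ; case/or3P => /eqP -> ; case/or3P => /eqP -> ;
  case/or3P => /eqP -> ; rewrite ?eqxx //= => _ _ ;
  rewrite ?[c y x]Hs ?[c z y]Hs ?[c z x]Hs ?eqxx //;
  try (by move=> _; rewrite eq_sym);
  by move=> /negP; case; apply/eqP/setP => w; rewrite !inE orbC.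
Qed.
Section Fiber.
Variables (I : finType) (a b d : I).
Hypotheses (ab : a != b) (bd : b != d) (ad : a != d).

Definition key (phi : {ffun I -> 'I_3}) : 'I_3 * 'I_3 * 'I_3 := (phi a, phi b, phi d).

Lemma fib_le (t t' : 'I_3 * 'I_3 * 'I_3) :
  #|[set phi | key phi == t]| <= #|[set phi | key phi == t']|.
Proof.
case: t => [[i j] k]; case: t' => [[i' j'] k'].
pose h (phi : {ffun I -> 'I_3}) : {ffun I -> 'I_3} :=
  [ffun x => if x == a then i' else if x == b then j' else if x == d then k' else phi x].
rewrite -(card_in_imset (f := h)).
  apply: subset_leq_card; apply/subsetP => _ /imsetP[phi _ ->].
  have ba : (b == a) = false by rewrite eq_sym (negbTE ab).
  have da : (d == a) = false by rewrite eq_sym (negbTE ad).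
  have db : (d == b) = false by rewrite eq_sym (negbTE bd).
  by rewrite inE /key !ffunE !eqxx ba da db.
move=> p1 p2; rewrite !inE /key => /eqP[H1a H1b H1d] /eqP[H2a H2b H2d] E.
apply/ffunP => x; move/ffunP/(_ x): E; rewrite !ffunE.
case: (x =P a) => [->|_]; first by rewrite H1a H2a.
case: (x =P b) => [->|_]; first by rewrite H1b H2b.
by case: (x =P d) => [->|//]; rewrite H1d H2d.
Qed.

Definition goodt (t : 'I_3 * 'I_3 * 'I_3) := [&& t.1.1 != t.1.2, t.1.2 != t.2 & t.1.1 != t.2].

Lemma card_goodt : #|goodt| = 6.
Proof.
rewrite -sum1_card big_mkcond /=.
rewrite -(pair_big xpredT xpredT (fun p k => if goodt (p, k) then 1 else 0)) /=.
rewrite -(pair_big xpredT xpredT (fun i j => \sum_(k < 3) if goodt (i, j, k) then 1 else 0)) /=.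
by rewrite !big_ord_recl !big_ord0.
Qed.

Lemma fiber :
  27 * #|[set phi : {ffun I -> 'I_3} | [&& phi a != phi b, phi b != phi d & phi a != phi d]]|
  = 6 * #|{ffun I -> 'I_3}|.
Proof.
pose F := #|[set phi | key phi == (ord0, ord0, ord0)]|.
have HF : forall t, #|[set phi | key phi == t]| = F.
  by move=> t; apply/eqP; rewrite eqn_leq !fib_le.
have -> : #|{ffun I -> 'I_3}| = 27 * F.
  rewrite -sum1_card (partition_big key xpredT) //=.
  rewrite (eq_bigr (fun _ => F)); last first.
    by move=> t _; rewrite -(HF t) -sum1dep_card.
  by rewrite big_const !card_prod !card_ord iter_addn_0 mulnC.
have -> : #|[set phi : {ffun I -> 'I_3} | [&& phi a != phi b, phi b != phi d & phi a != phi d]]| = 6 * F.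
  rewrite -sum1dep_card (partition_big key goodt) //=.
  rewrite (eq_bigr (fun _ => F)); last first.
    move=> t gt; rewrite -(HF t) -sum1dep_card; apply: eq_bigl => phi.
    case: (key phi =P t) => [E|_]; last by rewrite andbF.
    by move: gt; rewrite -E andbT /goodt /key /=.
  by rewrite sum_nat_const card_goodt.
by rewrite mulnCA.
Qed.
End Fiber.

Lemma sym_comp (C D : eqType) n (c : 'I_n -> 'I_n -> C) (h : C -> D) :
  sym_colouring c -> sym_colouring (fun x y => h (c x y)).
Proof. by move=> Hs x y; rewrite Hs. Qed.

Lemma rainbow_comp (C D : eqType) n (c : 'I_n -> 'I_n -> C) (h : C -> D) T :
  sym_colouring c -> rainbow (fun x y => h (c x y)) T -> rainbow c T.
Proof.
move=> Hs Hr; have H3 : #|T| = 3 by case/andP: Hr => /eqP.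
case: (card3 H3) => x [y [z [xy yz xz ET]]]; subst T.
move: Hr; rewrite (rainbowE (sym_comp h Hs) xy yz xz) (rainbowE Hs xy yz xz).
case/and3P => h1 h2 h3; apply/and3P; split.
- by apply: contraNneq h1 => ->.
- by apply: contraNneq h2 => ->.
- by apply: contraNneq h3 => ->.
Qed.

Lemma rainbow_inj (C D : eqType) n (c : 'I_n -> 'I_n -> C) (h : C -> D) T :
  sym_colouring c -> injective h -> rainbow (fun x y => h (c x y)) T = rainbow c T.
Proof.
move=> Hs hi; apply/idP/idP; first exact: rainbow_comp.
move=> Hr; have H3 : #|T| = 3 by case/andP: Hr => /eqP.
case: (card3 H3) => x [y [z [xy yz xz ET]]]; subst T.
by move: Hr; rewrite (rainbowE (sym_comp h Hs) xy yz xz) (rainbowE Hs xy yz xz) !(inj_eq hi).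
Qed.

Lemma rainbow_const (C : eqType) n (k : C) T : rainbow (fun _ _ : 'I_n => k) T = false.
Proof.
apply/negP => Hr; have H3 : #|T| = 3 by case/andP: Hr => /eqP.
case: (card3 H3) => x [y [z [xy yz xz ET]]]; subst T.
by move: Hr; rewrite (@rainbowE C n (fun _ _ => k) x y z (fun _ _ => erefl) xy yz xz) eqxx.
Qed.

Lemma AG_comp (C D : eqType) n (c : 'I_n -> 'I_n -> C) (h : C -> D) :
  sym_colouring c -> almost_gallai c -> almost_gallai (fun x y => h (c x y)).
Proof.
move=> Hs AG; apply/forall_inP => T1; rewrite inE => R1; apply/forall_inP => T2.
rewrite inE => R2.
move/forall_inP: AG => /(_ T1); rewrite inE (rainbow_comp Hs R1) => /(_ isT).
by move/forall_inP => /(_ T2); rewrite inE (rainbow_comp Hs R2) => /(_ isT).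
Qed.

From Stdlib Require Import Classical.

Lemma max_exists (P : nat -> Prop) B : P 0 -> (forall k, P k -> k <= B) ->
  exists k, P k /\ forall j, P j -> j <= k.
Proof.
move=> P0 PB; apply: NNPP => Hn.
have Hs : forall k, P k -> exists j, P j /\ k < j.
  move=> k Pk; case: (classic (exists j, P j /\ k < j)) => // hn; exfalso.
  apply: Hn; exists k; split => // j Pj; case: (leqP j k) => // kj.
  by exfalso; apply: hn; exists j.
have Hi : forall i, exists k, P k /\ i <= k.
  elim => [|i [k [Pk ik]]]; first by exists 0.
  have [j [Pj kj]] := Hs k Pk; exists j; split => //; exact: leq_ltn_trans ik kj.
have [k [Pk Bk]] := Hi B.+1.
by have := PB k Pk; rewrite leqNgt Bk.
Qed.

Lemma max_rainbow (C : eqType) n (k0 : C) : exists k, is_max_rainbow C n k.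
Proof.
pose P := fun k => exists c : 'I_n -> 'I_n -> C,
      sym_colouring c /\ almost_gallai c /\ #|rainbow_triangles c| = k.
have P0 : P 0.
  have E : rainbow_triangles (fun _ _ : 'I_n => k0) = set0.
    by apply/setP => T; rewrite !inE rainbow_const.
  exists (fun _ _ => k0); split => //; split; last by rewrite E cards0.
  by apply/forall_inP => T1; rewrite E inE.
have PB : forall k, P k -> k <= #|[set: {set 'I_n}]|.
  by move=> k' [c' [_ [_ <-]]]; apply/subset_leq_card/subsetT.
have [k [[c [Hs [AG Hc]]] Mk]] := max_exists P0 PB.
exists k; split; first by exists c.
by move=> c' Hs' AG'; apply: Mk; exists c'.
Qed.
Theorem lemma4p1 (n : nat) :
  exists t g : nat, [/\ is_tau3 n t, is_g n g, g <= t & 2 * t <= 9 * g].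
Proof.
have [t Ht] := max_rainbow n (0 : nat).
have [g Hg] := max_rainbow n (ord0 : 'I_3).
exists t, g; split => //.
- case: Ht Hg => _ Mt [[cg [Hsg [AGg Rg]]] _].
  pose d x y := val (cg x y).
  have E : rainbow_triangles d = rainbow_triangles cg.
    by apply/setP => T; rewrite !inE /d rainbow_inj //; apply: val_inj.
  rewrite -Rg -E; apply: Mt; first exact: sym_comp.
  exact: AG_comp.
case: Ht Hg => [[ct [Hs [AG Rt]]] _] [_ Mg].
pose m := \max_(p : 'I_n * 'I_n) ct p.1 p.2.
have Hm : forall x y, ct x y < m.+1.
  by move=> x y; rewrite ltnS; exact: (@leq_bigmax _ (fun p : 'I_n * 'I_n => ct p.1 p.2) (x, y)).
pose d (phi : {ffun 'I_m.+1 -> 'I_3}) x y := phi (inord (ct x y)).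
have Hsd : forall phi, sym_colouring (d phi) by move=> phi; exact: (sym_comp (fun k => phi (inord k)) Hs).
have Hd : forall phi, #|rainbow_triangles (d phi)| <= g.
  by move=> phi; apply: Mg => //; exact: (AG_comp (fun k => phi (inord k)) Hs AG).
have E : forall phi, #|rainbow_triangles (d phi)| =
    \sum_(T in rainbow_triangles ct) (T \in rainbow_triangles (d phi) : nat).
  move=> phi; rewrite (eq_bigr (fun T => if T \in rainbow_triangles (d phi) then 1 else 0));
    last by move=> T _; case: (_ \in _).
  rewrite -big_mkcondr sum1dep_card; apply: eq_card => T; rewrite !inE.
  by case Hr: (rainbow _ T); rewrite ?andbF // andbT (@rainbow_comp _ _ _ ct (fun k => phi (inord k)) T Hs Hr).
have G : forall T, T \in rainbow_triangles ct ->
    27 * \sum_phi (T \in rainbow_triangles (d phi) : nat) = 6 * #|{ffun 'I_m.+1 -> 'I_3}|.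
  move=> T; rewrite inE => RT; have H3 : #|T| = 3 by case/andP: RT => /eqP.
  case: (card3 H3) => x [y [z [xy yz xz ET]]]; subst T.
  move: RT; rewrite (rainbowE Hs xy yz xz) => /and3P[h1 h2 h3].
  have D : forall u v u' v', ct u v != ct u' v' ->
      (inord (ct u v) : 'I_m.+1) != inord (ct u' v').
    move=> u v u' v'; apply: contra => /eqP/(congr1 (@nat_of_ord _)).
    by rewrite !inordK // => ->.
  rewrite -(fiber (D _ _ _ _ h1) (D _ _ _ _ h2) (D _ _ _ _ h3)).
  congr (27 * _).
  rewrite (eq_bigr (fun phi => if [set x; y; z] \in rainbow_triangles (d phi) then 1 else 0));
    last by move=> phi _; case: (_ \in _).
  rewrite -big_mkcond sum1dep_card; apply: eq_card => phi; rewrite !inE.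
  by rewrite (rainbowE (Hsd phi) xy yz xz).
set N := #|{ffun 'I_m.+1 -> 'I_3}|.
have N0 : 0 < N by rewrite /N card_ffun card_ord expn_gt0.
have L : \sum_(phi : {ffun 'I_m.+1 -> 'I_3}) #|rainbow_triangles (d phi)| <= N * g.
  apply: (@leq_trans (\sum_(phi : {ffun 'I_m.+1 -> 'I_3}) g)); first by apply: leq_sum => phi _; exact: Hd.
  by rewrite big_const iter_addn_0 mulnC.
have S : 27 * \sum_(phi : {ffun 'I_m.+1 -> 'I_3}) #|rainbow_triangles (d phi)| = t * (6 * N).
  under eq_bigr do rewrite E.
  rewrite exchange_big big_distrr /= (eq_bigr (fun _ => 6 * N)); last first.
    by move=> T RT; rewrite G.
  by rewrite sum_nat_const Rt.
have H1 : t * (6 * N) <= 27 * (N * g) by rewrite -S leq_mul2l L orbT.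
have e1 : t * (6 * N) = N * (3 * (2 * t)) by lia.
have e2 : 27 * (N * g) = N * (3 * (9 * g)) by lia.
by move: H1; rewrite e1 e2 !leq_pmul2l.
Qed.
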